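(* Let $(V_o,w_o,\mu_o)$ be a simple weighted graph with adapted weight $\sigma_o$, fix $\bar x\in V_o$, and let $(V,w,\mu)$ be its modified graph with weight $\mathfrak n$ and adapted path metric $d_\sigma$, with edge set $E$. Assume the balls of $(V,d_\sigma)$ are finite. For $n\in\mathbb N$ let $R_n=2^{n+4}$ and set: - $B_n^o=B_{d_\sigma}(\bar x,R_n-1)\cap V_o$; - $E^o_n=\{(x,y)\in E_o: x,y\in B^o_n\}$; - $B_n'=B_n^o\cup\bigcup_{e\in E_n^o}V_e$ (with $V_e$ taken for whichever orientation of $e$ lies in $E_o^+$); - $B_n=\operatorname{int}(B_n')$. Here closures, interiors and boundaries are taken with respect to the graph $(V,E)$. Then: (1) $\partial B_n\subseteq V_o$; (2) $B_{d_\sigma}(\bar x,R_n-3)\subseteq B_n\subseteq B_{d_\sigma}(\bar x,R_n)$; (3) for all $n\ge1$, if $x\in\partial B_{n-1}$ and $y\in\partial B_n$, then $d_\sigma(x,y)\ge R_{n-1}-3$.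
   Context: **Weighted graphs.** A simple weighted graph $(V,w,\mu)$ consists of a countably infinite set $V$, a symmetric function $w:V\times V\to[0,\infty)$ and a function $\mu:V\to(0,\infty)$. The graph with edges $\{x\sim y:w(x,y)>0\}$ is assumed to be locally finite, connected, and without loops or multiple edges. **Adapted weights and metrics.** An adapted weight is a symmetric $\sigma:E\to(0,1]$ with $\frac1{\mu(x)}\sum_y w(x,y)\sigma(x,y)^2\le1$ for all $x$. The adapted path metric $d_\sigma(x,y)$ is the infimum of $\sum_i\sigma(x_i,x_{i+1})$ over paths $x=x_0\sim\cdots\sim x_n=y$. Closed balls are $B_d(x,r)=\{y:d(x,y)\le r\}$. **Modified graph.** Fix an orientation $E_o^+$ of $E_o$, and let $\mathfrak n:E_o\to\mathbb N_+$ be symmetric with $\mathfrak n\ge2$. For $e=(x,y)\in E_o^+$, add distinct new vertices $V_e=\{x^e_1,\dots,x^e_{\mathfrak n(e)-1}\}$, set $x_0^e=x$, $x^e_{\mathfrak n(e)}=y$, and replace the edge $x\sim y$ by the path $x^e_0\sim\cdots\sim x^e_{\mathfrak n(e)}$; $E$ is the resulting edge set on $V=V_o\cup\bigcup_eV_e$. Weights and measure: - $w(x^e_i,x^e_{i+1})=\mathfrak n(e)w_o(e)$, symmetric, and $w=0$ otherwise; - $\mu=\mu_o$ on $V_o$, and $\mu(x^e_i)=2w_o(e)\sigma_o(e)^2/\mathfrak n(e)$; - $\sigma(x^e_i,x^e_{i+1})=\sigma_o(e)/\mathfrak n(e)$. **Graph closure, boundary, interior.** For finite $K\subseteq V$: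 - $\mathrm{cl}(K)=K\cup\{x:\exists y\in K,\ x\sim y\}$; - $\partial K=\mathrm{cl}(K)\setminus K$; - $\operatorname{int}(K)$ is the largest $L\subseteq K$ with $\mathrm{cl}(L)\subseteq K$. *)

(* Defs.v *)
From Stdlib Require Import Relations.
From mathcomp Require Import all_boot all_order all_algebra.
From mathcomp Require Import all_classical all_reals.
From mathcomp Require Import ereal.
Set Implicit Arguments. Unset Strict Implicit. Unset Printing Implicit Defensive.
Import Order.TTheory GRing.Theory Num.Theory.
Local Open Scope classical_set_scope.
Local Open Scope ring_scope.
Local Open Scope ereal_scope.
Local Open Scope ring_scope.

Definition oedge {R : realType} {Vo : Type} (wo : Vo -> Vo -> R) (x y : Vo) : Prop :=
  0 < wo x y.

Definition simple_weighted_graph {R : realType} {Vo : countType}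
  (wo : Vo -> Vo -> R) (muo : Vo -> R) : Prop :=
  [/\ infinite_set [set: Vo],
      (forall x y, wo x y = wo y x),
      (forall x y, 0 <= wo x y) &
      (forall x, 0 < muo x)] /\
  [/\
      (forall x, finite_set [set y | oedge wo x y]),
      (forall x y, clos_refl_trans Vo (oedge wo) x y) &
      (forall x, wo x x = 0)].

Definition adapted_weight {R : realType} {Vo : countType}
  (wo : Vo -> Vo -> R) (muo : Vo -> R) (so : Vo -> Vo -> R) : Prop :=
  [/\ (forall x y, oedge wo x y -> so x y = so y x),
      (forall x y, oedge wo x y -> 0 < so x y <= 1) &
      (forall x, (\sum_(y \in [set y | oedge wo x y]) (wo x y * so x y ^+ 2))
                   / muo x <= 1)].

Definition orientation {R : realType} {Vo : Type}
  (wo : Vo -> Vo -> R) (pos : Vo -> Vo -> Prop) : Prop :=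
  (forall x y, pos x y -> oedge wo x y) /\
  (forall x y, oedge wo x y -> (pos x y \/ pos y x) /\ ~ (pos x y /\ pos y x)).

Definition subdiv_weight {R : realType} {Vo : Type}
  (wo : Vo -> Vo -> R) (n : Vo -> Vo -> nat) : Prop :=
  forall x y, oedge wo x y -> n x y = n y x /\ (2 <= n x y)%N.

(* Vertices: Old x (x in V_o) and New x y i = x^e_i for e = (x,y) in E_o^+,
   0 < i < n(e).  Terms New x y i not satisfying this are not vertices of V;
   they are never adjacent to anything (see [mvalid]). *)
Inductive mvert (Vo : Type) : Type :=
| Old of Vo
| New of Vo & Vo & nat.
Arguments Old {Vo}.
Arguments New {Vo}.

Section Modified.
Context {R : realType} {Vo : Type}.
Variables (wo : Vo -> Vo -> R) (so : Vo -> Vo -> R)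
          (n : Vo -> Vo -> nat) (pos : Vo -> Vo -> Prop).

Definition mvalid (v : mvert Vo) : Prop :=
  match v with
  | Old _ => True
  | New x y i => pos x y /\ (0 < i < n x y)%N
  end.

Definition pt (x y : Vo) (i : nat) : mvert Vo :=
  if i == 0%N then Old x else if i == n x y then Old y else New x y i.

Definition mstep (u v : mvert Vo) (s : R) : Prop :=
  exists x y i, [/\ pos x y, (i < n x y)%N,
    (u = pt x y i /\ v = pt x y i.+1) \/ (v = pt x y i /\ u = pt x y i.+1) &
    s = so x y / (n x y)%:R].

Definition madj (u v : mvert Vo) : Prop := exists s, mstep u v s.

Inductive mpath : mvert Vo -> mvert Vo -> R -> Prop :=
| mpath_nil u : mpath u u 0
| mpath_cons u v w s L : mstep u v s -> mpath v w L -> mpath u w (s + L).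

(* adapted path metric d_sigma (infimum over paths, +oo if none) *)
Definition dsig (u v : mvert Vo) : \bar R :=
  ereal_inf [set (L%:E) | L in mpath u v].

Definition mball (x : mvert Vo) (r : R) : set (mvert Vo) :=
  [set y | mvalid y /\ (dsig x y <= r%:E)%E].

Definition gcl (K : set (mvert Vo)) : set (mvert Vo) :=
  K `|` [set x | exists2 y, K y & madj x y].
Definition gbd (K : set (mvert Vo)) : set (mvert Vo) := gcl K `\` K.
Definition gint (K : set (mvert Vo)) : set (mvert Vo) :=
  [set x | exists L : set (mvert Vo), [/\ L `<=` K, gcl L `<=` K & L x]].

Definition Rn (k : nat) : R := 2 ^+ (k + 4).

Definition Bo (xbar : Vo) (k : nat) : set Vo :=
  [set x | (dsig (Old xbar) (Old x) <= (Rn k - 1)%:E)%E].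

Definition Bprime (xbar : Vo) (k : nat) : set (mvert Vo) :=
  [set v | match v with
           | Old x => Bo xbar k x
           | New x y i => [/\ pos x y, (0 < i < n x y)%N,
                              Bo xbar k x & Bo xbar k y]
           end].

Definition Bn (xbar : Vo) (k : nat) : set (mvert Vo) := gint (Bprime xbar k).

End Modified.

(* Main.v *)
Require Import Defs.
From mathcomp Require Import all_boot all_order all_algebra.
From mathcomp Require Import all_classical all_reals.
From mathcomp Require Import ereal.
From mathcomp Require Import lra zify.
Import Order.TTheory GRing.Theory Num.Theory.
Local Open Scope classical_set_scope.
Local Open Scope ring_scope.

Lemma mpath_cat (R : realType) (Vo : Type) (so : Vo -> Vo -> R) n pos a b c L1 L2 :
  mpath so n pos a b L1 -> mpath so n pos b c L2 -> mpath so n pos a c (L1 + L2).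
Proof.
elim=> [u|u v w s L st _ IH] p2; first by rewrite add0r.
rewrite -addrA; exact: mpath_cons st (IH p2).
Qed.

Lemma dsig_T1 (R : realType) (Vo : Type) (so : Vo -> Vo -> R) n pos a b c L :
  mpath so n pos b c L ->
  (dsig so n pos a c <= dsig so n pos a b + L%:E)%E.
Proof.
move=> pbc; rewrite -leeBlDr //.
apply: le_ereal_inf_tmp => _ [L1 p1 <-].
rewrite leeBlDr //= -EFinD.
apply: ereal_inf_lbound; exists (L1 + L) => //.
exact: mpath_cat p1 pbc.
Qed.

Lemma pt_paths (R : realType) (Vo : Type) (so : Vo -> Vo -> R) n pos x y :
  pos x y -> forall m i, (i + m <= n x y)%N ->
  mpath so n pos (pt n x y i) (pt n x y (i + m)) (m%:R * (so x y / (n x y)%:R)) /\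
  mpath so n pos (pt n x y (i + m)) (pt n x y i) (m%:R * (so x y / (n x y)%:R)).
Proof.
move=> pxy; elim=> [|m IH] i him.
  by rewrite addn0 mul0r; split; apply: mpath_nil.
have st1 : mstep so n pos (pt n x y i) (pt n x y i.+1) (so x y / (n x y)%:R).
  exists x, y, i; split => //; [lia | by left].
have st2 : mstep so n pos (pt n x y (i + m).+1) (pt n x y (i + m)) (so x y / (n x y)%:R).
  exists x, y, (i + m); split => //; [lia | by right].
split.
- have [p _] := IH i.+1 ltac:(lia).
  rewrite addnS -addSn mulrSr mulrDl mul1r addrC.
  exact: mpath_cons st1 p.
- have [_ p] := IH i ltac:(lia).
  rewrite addnS mulrSr mulrDl mul1r addrC.
  exact: mpath_cons st2 p.
Qed.

Lemma pt_New (Vo : Type) (n : Vo -> Vo -> nat) x y m a b i :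
  pt n x y m = New a b i -> [/\ x = a, y = b & m = i].
Proof. by rewrite /pt; case: eqP => // _; case: eqP => // _ [-> -> ->]. Qed.

Lemma mstep_inv (R : realType) (Vo : Type) (so : Vo -> Vo -> R) n pos u v s :
  mstep so n pos u v s -> exists x y j j', [/\ pos x y, (j <= n x y)%N,
     (j' <= n x y)%N, u = pt n x y j & v = pt n x y j'].
Proof.
move=> [x [y [i [pxy hi [[-> ->]|[-> ->]] _]]]].
- by exists x, y, i, i.+1; split => //; apply: ltnW.
- by exists x, y, i.+1, i; split => //; apply: ltnW.
Qed.

Lemma madj_valid (R : realType) (Vo : Type) (so : Vo -> Vo -> R) n pos u v :
  (forall x y, pos x y -> (2 <= n x y)%N) ->
  madj so n pos u v -> mvalid n pos u /\ mvalid n pos v.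
Proof.
move=> hn [s /mstep_inv [x [y [j [j' [pxy hj hj' -> ->]]]]]].
by split; rewrite /pt; case: eqP => // ?; case: eqP => // ? /=; split => //; lia.
Qed.

Lemma pt_Bprime (R : realType) (Vo : countType) (so : Vo -> Vo -> R) n pos xbar k x y m :
  pos x y -> (m <= n x y)%N -> Bo so n pos xbar k x -> Bo so n pos xbar k y ->
  Bprime so n pos xbar k (pt n x y m).
Proof.
move=> pxy hm bx b_y; rewrite /pt; case: eqP => // ?; case: eqP => // ? /=.
split => //; lia.
Qed.

Lemma s_bound (R : realType) (s : R) (N m : nat) :
  (0 < N)%N -> 0 <= s <= 1 -> (m <= N)%N -> m%:R * (s / N%:R) <= 1.
Proof.
move=> hN /andP [s0 s1] hm.
have hN' : (0 : R) < N%:R by rewrite ltr0n.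
apply: (le_trans (y := N%:R * (s / N%:R))).
  apply: ler_wpM2r; first by apply: divr_ge0 => //; apply: ltW.
  by rewrite ler_nat.
by rewrite mulrC -mulrA mulVf ?mulr1 // gt_eqF.
Qed.

Lemma bound_trans (R : realType) (Vo : Type) (so : Vo -> Vo -> R) n pos a b c L r r' :
  mpath so n pos b c L -> r + L <= r' ->
  (dsig so n pos a b <= r%:E)%E -> (dsig so n pos a c <= r'%:E)%E.
Proof.
move=> p hr hb; apply: le_trans (@dsig_T1 _ _ _ _ _ a _ _ _ p) _.
by apply: le_trans (leeD2r _ hb) _; rewrite -EFinD lee_fin.
Qed.

Lemma ends_close (R : realType) (Vo : Type) (so : Vo -> Vo -> R) n pos x y j :
  pos x y -> (0 < n x y)%N -> 0 <= so x y <= 1 -> (j <= n x y)%N ->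
  (exists2 L, L <= 1 & mpath so n pos (pt n x y j) (Old x) L) /\
  (exists2 L, L <= 1 & mpath so n pos (pt n x y j) (Old y) L) /\
  (exists2 L, L <= 1 & mpath so n pos (Old x) (pt n x y j) L).
Proof.
move=> pxy n0 hs hj.
have e0 : Old x = pt n x y 0 by [].
have en : Old y = pt n x y (n x y) by rewrite /pt eqxx; case: eqP => // h; lia.
have h1 : (0 + j <= n x y)%N by lia.
have [p1 p2] := @pt_paths _ _ so _ _ _ _ pxy j 0 h1.
have h2 : (j + (n x y - j) <= n x y)%N by lia.
have [p3 _] := @pt_paths _ _ so _ _ _ _ pxy (n x y - j) j h2.
rewrite subnKC // in p3.
split; last split.
- by eexists; [exact: s_bound n0 hs hj | rewrite e0; exact: p2].
- exists ((n x y - j)%:R * (so x y / (n x y)%:R)); last by rewrite en.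
  by apply: s_bound n0 hs _; lia.
- by eexists; [exact: s_bound n0 hs hj | rewrite e0; exact: p1].
Qed.

Lemma Bn_iff (R : realType) (Vo : countType) (so : Vo -> Vo -> R) n pos xbar k u :
  Bn so n pos xbar k u <->
  (Bprime so n pos xbar k u /\ forall z, madj so n pos z u -> Bprime so n pos xbar k z).
Proof.
split.
- move=> [L [LB clB Lu]]; split; first exact: LB.
  by move=> z hz; apply: clB; right; exists u.
- move=> [hu hz]; exists [set u]; split => //.
  + by move=> z ->.
  + by move=> z [->|[w -> hw]] //; apply: hz.
Qed.

Arguments mpath_cat {R Vo so n pos a b c L1 L2}.
Arguments dsig_T1 {R Vo so n pos} a {b c L}.
Arguments pt_paths {R Vo} so {n pos x y}.
Arguments pt_New {Vo n x y m a b i}.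
Arguments mstep_inv {R Vo so n pos u v s}.
Arguments madj_valid {R Vo so n pos u v}.
Arguments pt_Bprime {R Vo so n pos xbar k x y m}.
Arguments bound_trans {R Vo so n pos a b c L r r'}.
Arguments ends_close {R Vo so n pos x y j}.

Theorem lemma4p3 (R : realType) (Vo : countType)
  (wo : Vo -> Vo -> R) (muo : Vo -> R) (so : Vo -> Vo -> R)
  (n : Vo -> Vo -> nat) (pos : Vo -> Vo -> Prop) (xbar : Vo) :
  simple_weighted_graph wo muo ->
  adapted_weight wo muo so ->
  orientation wo pos ->
  subdiv_weight wo n ->
  (forall (x : mvert Vo) (r : R), mvalid n pos x ->
     finite_set (mball so n pos x r)) ->
  forall k : nat,
    [/\ gbd so n pos (Bn so n pos xbar k) `<=` range (@Old Vo),
        mball so n pos (Old xbar) (@Rn R k - 3) `<=` Bn so n pos xbar k,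
        Bn so n pos xbar k `<=` mball so n pos (Old xbar) (@Rn R k) &
        ((1 <= k)%N -> forall x y : mvert Vo,
            gbd so n pos (Bn so n pos xbar k.-1) x ->
            gbd so n pos (Bn so n pos xbar k) y ->
            ((@Rn R k.-1 - 3)%:E <= dsig so n pos x y)%E)].
Proof.
move=> _ [_ hso _] [hpo _] hn _.
have hP : forall x y, pos x y -> [/\ 0 <= so x y <= 1, (0 < n x y)%N & (2 <= n x y)%N].
  move=> x y /hpo pxy; have /andP [s0 s1] := hso _ _ pxy.
  have [_ h2] := hn _ _ pxy.
  by split => //; [rewrite (ltW s0) | lia].
have hn2 : forall x y, pos x y -> (2 <= n x y)%N by move=> x y /hP [].
have key : forall k x y j, pos x y -> (j <= n x y)%N ->
    (dsig so n pos (Old xbar) (pt n x y j) <= (@Rn R k - 3)%:E)%E ->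
    Bo so n pos xbar k x /\ Bo so n pos xbar k y.
  move=> k x y j pxy hj hd; have [hs n0 _] := hP _ _ pxy.
  have [[L1 L1le p1] [[L2 L2le p2] _]] := ends_close pxy n0 hs hj.
  split; rewrite /Bo /=.
  - by apply: bound_trans p1 _ hd; lra.
  - by apply: bound_trans p2 _ hd; lra.
have P1 : forall k, gbd so n pos (Bn so n pos xbar k) `<=` range (@Old Vo).
  move=> k v [[//|[u hu hvu]] hnv].
  have [hvB _] : Bprime so n pos xbar k v /\ True.
    by split => //; have [_ +] := (@Bn_iff _ _ so n pos xbar k u).1 hu; apply.
  case: v hvB hvu hnv => [z _ _ _|a b i hB hvu hnv]; first by exists z.
  exfalso; apply: hnv; apply/Bn_iff; split => // z [s /mstep_inv [x [y [j [j' [pxy hj hj' ez ev]]]]]].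
  have [ea eb ei] := pt_New (esym ev).
  subst; case: hB => _ _ ba bb.
  exact: pt_Bprime.
have P2a : forall k, mball so n pos (Old xbar) (@Rn R k - 3) `<=` Bn so n pos xbar k.
  move=> k v [hv hd]; apply/Bn_iff; split.
  - case: v hv hd => [z _ hd|a b i [pab hi] hd] /=.
      by rewrite /Bo; apply: le_trans hd _; rewrite lee_fin; lra.
    have ev : New a b i = pt n a b i.
      by rewrite /pt; case: eqP => ?; [lia|case: eqP => ? //; lia].
    have [ba bb] := key k a b i pab ltac:(lia) ltac:(by rewrite -ev).
    by split.
  - move=> z [s /mstep_inv [x [y [j [j' [pxy hj hj' ez ev]]]]]].
    subst; have [bx b_y] := key k x y j' pxy hj' hd.
    exact: pt_Bprime.
have P2b : forall k, Bn so n pos xbar k `<=` mball so n pos (Old xbar) (@Rn R k).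
  move=> k v /Bn_iff [hB _].
  case: v hB => [z hz|a b i [pab hi ba bb]]; split => //.
    by apply: le_trans hz _; rewrite lee_fin; lra.
  have [hs n0 _] := hP _ _ pab.
  have ev : New a b i = pt n a b i.
    by rewrite /pt; case: eqP => ?; [lia|case: eqP => ? //; lia].
  have [_ [_ [L Lle p]]] := ends_close pab n0 hs (ltnW (proj2 (andP hi))).
  rewrite ev; apply: bound_trans p _ ba; lra.
move=> k; split; [exact: P1 | exact: P2a | exact: P2b |].
move=> k1 x y hx hy.
have [z _ ez] := P1 _ _ hx; subst x.
have hzB : Bo so n pos xbar k.-1 z.
  case: hx => [[hin|[u hu hzu]] hnx]; first by [].
  have [_ +] := (@Bn_iff _ _ so n pos xbar k.-1 u).1 hu.
  by move/(_ _ hzu).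
have yv : mvalid n pos y.
  case: hy => [[hin|[u _ hyu]] hny]; first by [].
  exact: (madj_valid hn2 hyu).1.
rewrite leNgt; apply/negP => /ereal_inf_lt [_ [L p <-]] hL.
case: hy => _; apply; apply: P2a; split => //.
apply: bound_trans p _ hzB.
have -> : @Rn R k = 2 * @Rn R k.-1.
  by rewrite /Rn -{1}(prednK k1) addSn exprS.
rewrite lte_fin in hL; lra.
Qed.
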